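(* Let $S$ be a homogroup with $\mathrm{Ker}(S)=\mathrm{Red}(S)$. Then every direct power $\Pi S=\prod_{i\in I}\mathrm{Pr}(S)$ is $\mathcal{L}_{s\text{-}pred}(\Pi S)$-equationally Noetherian.
   Context: A semigroup $S$ is a homogroup if it has a kernel $\mathrm{Ker}(S)$ (minimal two-sided ideal) which is a group. $\mathrm{Red}(S)=\{ab\mid a,b\in S\}$ is the set of reducible elements. $\mathcal{L}_{s\text{-}pred}=\{M\}$ with $M$ ternary; $\mathrm{Pr}(S)$ is the structure on $S$ with $M(x,y,z)\Leftrightarrow xy=z$. The direct power consists of sequences $[a_i\mid i\in I]$ with $M$ holding coordinatewise; $\mathcal{L}_{s\text{-}pred}(\Pi S)$ adds a constant symbol for every element of the power. Equations are atomic formulas ($M(t_1,t_2,t_3)$ or $t_1=t_2$, each $t_k$ a variable or constant); systems are sets of equations in a fixed finite set of variables; the structure is equationally Noetherian in this language if every system is equivalent (same solution set) to a finite subsystem. *)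

(* Defs.v *)
From Stdlib Require Import List Fin.

Definition associative_op {S : Type} (op : S -> S -> S) : Prop :=
  forall a b c, op a (op b c) = op (op a b) c.

Definition is_ideal {S : Type} (op : S -> S -> S) (J : S -> Prop) : Prop :=
  (exists x, J x) /\
  (forall s x, J x -> J (op s x)) /\
  (forall s x, J x -> J (op x s)).

Definition is_kernel {S : Type} (op : S -> S -> S) (K : S -> Prop) : Prop :=
  is_ideal op K /\
  forall J, is_ideal op J -> (forall x, J x -> K x) -> forall x, K x -> J x.

Definition is_subgroup_set {S : Type} (op : S -> S -> S) (K : S -> Prop) : Prop :=
  (forall x y, K x -> K y -> K (op x y)) /\
  exists e, K e /\
    (forall x, K x -> op e x = x /\ op x e = x) /\
    (forall x, K x -> exists y, K y /\ op x y = e /\ op y x = e).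

Definition homogroup {S : Type} (op : S -> S -> S) : Prop :=
  associative_op op /\ exists K, is_kernel op K /\ is_subgroup_set op K.

Definition Red {S : Type} (op : S -> S -> S) (x : S) : Prop :=
  exists a b, x = op a b.

(** Direct power  Pi S = prod_{i in I} Pr(S): carrier [I -> S], with the
    ternary predicate M holding coordinatewise. *)
Definition PowM {S I : Type} (op : S -> S -> S) (x y z : I -> S) : Prop :=
  forall i, op (x i) (y i) = z i.

Inductive term (A V : Type) : Type :=
| TVar : V -> term A V
| TConst : A -> term A V.
Arguments TVar {A V} _.
Arguments TConst {A V} _.

Inductive equation (A V : Type) : Type :=
| EqM : term A V -> term A V -> term A V -> equation A V
| EqEq : term A V -> term A V -> equation A V.
Arguments EqM {A V} _ _ _.
Arguments EqEq {A V} _ _.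

Definition eval_term {A V : Type} (v : V -> A) (t : term A V) : A :=
  match t with TVar x => v x | TConst c => c end.

Definition sat_eq {A V : Type} (M : A -> A -> A -> Prop) (v : V -> A)
  (e : equation A V) : Prop :=
  match e with
  | EqM t1 t2 t3 => M (eval_term v t1) (eval_term v t2) (eval_term v t3)
  | EqEq t1 t2 => eval_term v t1 = eval_term v t2
  end.

Definition eq_noetherian {A : Type} (M : A -> A -> A -> Prop) : Prop :=
  forall (n : nat) (Sys : equation A (Fin.t n) -> Prop),
    exists l : list (equation A (Fin.t n)),
      (forall e, In e l -> Sys e) /\
      (forall v : Fin.t n -> A,
         (forall e, Sys e -> sat_eq M v e) <-> (forall e, In e l -> sat_eq M v e)).

(* Main.v *)
Require Import Defs.
From Stdlib Require Import List.
From Stdlib Require Import Classical.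
Import ListNotations.


Lemma comm_e {S : Type} (op : S -> S -> S) (e : S)
  (assoc : associative_op op)
  (Hid : forall a b, op e (op a b) = op a b /\ op (op a b) e = op a b) :
  forall a, op e a = op a e.
Proof.
  intro a.
  rewrite <- (proj2 (Hid e a)).
  rewrite <- assoc.
  apply (proj1 (Hid a e)).
Qed.

Lemma split_e {S : Type} (op : S -> S -> S) (e : S)
  (assoc : associative_op op)
  (Hid : forall a b, op e (op a b) = op a b /\ op (op a b) e = op a b) :
  forall a b, op a b = op (op a e) (op b e).
Proof.
  intros a b.
  rewrite assoc.
  rewrite <- (comm_e op e assoc Hid a).
  rewrite <- (assoc e a b).
  rewrite (proj1 (Hid a b)).
  symmetry; apply (proj2 (Hid a b)).
Qed.

Lemma rcanc {S : Type} (op : S -> S -> S) (e : S)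
  (assoc : associative_op op)
  (Hid : forall a b, op e (op a b) = op a b /\ op (op a b) e = op a b)
  (Hinv : forall a b, exists y, op y (op a b) = e /\ op (op a b) y = e) :
  forall a b c d, op a c = op b c -> op a d = op b d.
Proof.
  intros a b c d H.
  rewrite (split_e op e assoc Hid a c), (split_e op e assoc Hid b c) in H.
  destruct (Hinv c e) as [y [_ Hy]].
  assert (Hab : op a e = op b e).
  { transitivity (op (op (op a e) (op c e)) y).
    - rewrite <- assoc, Hy. symmetry; apply (proj2 (Hid a e)).
    - rewrite H, <- assoc, Hy. apply (proj2 (Hid b e)). }
  rewrite (split_e op e assoc Hid a d), (split_e op e assoc Hid b d), Hab.
  reflexivity.
Qed.

Lemma lcanc {S : Type} (op : S -> S -> S) (e : S)
  (assoc : associative_op op)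
  (Hid : forall a b, op e (op a b) = op a b /\ op (op a b) e = op a b)
  (Hinv : forall a b, exists y, op y (op a b) = e /\ op (op a b) y = e) :
  forall a b c d, op c a = op c b -> op d a = op d b.
Proof.
  intros a b c d H.
  rewrite (split_e op e assoc Hid c a), (split_e op e assoc Hid c b) in H.
  destruct (Hinv c e) as [y [Hy _]].
  assert (Hab : op a e = op b e).
  { transitivity (op y (op (op c e) (op a e))).
    - rewrite assoc, Hy. symmetry; apply (proj1 (Hid a e)).
    - rewrite H, assoc, Hy. apply (proj1 (Hid b e)). }
  rewrite (split_e op e assoc Hid d a), (split_e op e assoc Hid d b), Hab.
  reflexivity.
Qed.

Definition pos {S : Type} (W W' V V' : S) : Prop :=
  (W = W' /\ V = V') \/ (W = V /\ W' = V').

Lemma transfer {S : Type} (op : S -> S -> S)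
  (RC : forall a b c d, op a c = op b c -> op a d = op b d)
  (LC : forall a b c d, op c a = op c b -> op d a = op d b) :
  forall W1 W2 W3 W1' W2' W3' V1 V2 V3 V1' V2' V3',
  pos W1 W1' V1 V1' -> pos W2 W2' V2 V2' -> pos W3 W3' V3 V3' ->
  op W1 W2 = W3 -> op W1' W2' = W3' -> op V1 V2 = V3 -> op V1' V2' = V3'.
Proof.
  intros W1 W2 W3 W1' W2' W3' V1 V2 V3 V1' V2' V3' P1 P2 P3 H1 H2 H3.
  destruct P1 as [[-> ->]|[-> ->]]; destruct P2 as [[-> ->]|[-> ->]];
  destruct P3 as [[-> ->]|[-> ->]]; subst; try reflexivity; try congruence.
  all: match goal with
  | H : ?f ?C ?Y = ?f ?C ?Z |- ?f ?X ?Y = ?f ?X ?Z => exact (LC _ _ _ _ H)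
  | H : ?f ?C ?Z = ?f ?C ?Y |- ?f ?X ?Y = ?f ?X ?Z => exact (eq_sym (LC _ _ _ _ H))
  | H : ?f ?Y ?C = ?f ?Z ?C |- ?f ?Y ?X = ?f ?Z ?X => exact (RC _ _ _ _ H)
  | H : ?f ?Z ?C = ?f ?Y ?C |- ?f ?Y ?X = ?f ?Z ?X => exact (eq_sym (RC _ _ _ _ H))
  end.
Qed.

Definition shape_t {A V : Type} (t : term A V) : term unit V :=
  match t with TVar x => TVar x | TConst _ => TConst tt end.

Definition shape_e {A V : Type} (e : equation A V) : equation unit V :=
  match e with
  | EqM t1 t2 t3 => EqM (shape_t t1) (shape_t t2) (shape_t t3)
  | EqEq t1 t2 => EqEq (shape_t t1) (shape_t t2)
  end.

Fixpoint fin_all (n : nat) : list (Fin.t n) :=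
  match n with
  | 0 => []
  | S m => Fin.F1 :: map Fin.FS (fin_all m)
  end.

Lemma fin_all_in : forall n (x : Fin.t n), In x (fin_all n).
Proof.
  induction x; simpl; [left; reflexivity | right; apply in_map; exact IHx].
Qed.

Definition all_terms (n : nat) : list (term unit (Fin.t n)) :=
  TConst tt :: map TVar (fin_all n).

Lemma all_terms_in : forall n (t : term unit (Fin.t n)), In t (all_terms n).
Proof.
  intros n [x|[]]; simpl; [right; apply in_map; apply fin_all_in | left; reflexivity].
Qed.

Definition all_shapes (n : nat) : list (equation unit (Fin.t n)) :=
  flat_map (fun t1 => flat_map (fun t2 =>
     EqEq t1 t2 :: map (fun t3 => EqM t1 t2 t3) (all_terms n)) (all_terms n))
   (all_terms n).

Lemma all_shapes_in : forall n (s : equation unit (Fin.t n)), In s (all_shapes n).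
Proof.
  intros n [t1 t2 t3|t1 t2]; unfold all_shapes; apply in_flat_map;
  exists t1; split; try apply all_terms_in; apply in_flat_map;
  exists t2; split; try apply all_terms_in.
  - right; apply in_map; apply all_terms_in.
  - left; reflexivity.
Qed.

Lemma term_pos {S I V : Type} (w v : V -> I -> S) (t1 t2 : term (I -> S) V) (i : I) :
  shape_t t1 = shape_t t2 ->
  pos (eval_term w t1 i) (eval_term w t2 i) (eval_term v t1 i) (eval_term v t2 i).
Proof.
  destruct t1, t2; simpl; intro H; try discriminate.
  - injection H as ->; left; split; reflexivity.
  - right; split; reflexivity.
Qed.

Lemma same_shape {S I V : Type} (op : S -> S -> S)
  (RC : forall a b c d, op a c = op b c -> op a d = op b d)
  (LC : forall a b c d, op c a = op c b -> op d a = op d b)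
  (w v : V -> I -> S) (e1 e2 : equation (I -> S) V) :
  shape_e e1 = shape_e e2 -> sat_eq (PowM op) w e1 -> sat_eq (PowM op) w e2 ->
  sat_eq (PowM op) v e1 -> sat_eq (PowM op) v e2.
Proof.
  destruct e1 as [a1 a2 a3|a1 a2], e2 as [b1 b2 b3|b1 b2]; simpl; intro Hs;
    try discriminate.
  - injection Hs as E1 E2 E3. intros H1 H2 H3 i.
    exact (transfer op RC LC _ _ _ _ _ _ _ _ _ _ _ _
      (term_pos w v a1 b1 i E1) (term_pos w v a2 b2 i E2) (term_pos w v a3 b3 i E3)
      (H1 i) (H2 i) (H3 i)).
  - injection Hs as E1 E2.
    destruct a1, a2, b1, b2; simpl in *; try discriminate;
    repeat match goal with H : TVar _ = TVar _ |- _ => injection H as H; subst end;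
    congruence.
Qed.

Lemma class_fin {A V : Type} (M : A -> A -> A -> Prop)
  (Hsame : forall w v (e1 e2 : equation A V), shape_e e1 = shape_e e2 ->
     sat_eq M w e1 -> sat_eq M w e2 -> sat_eq M v e1 -> sat_eq M v e2)
  (Sys : equation A V -> Prop) (s : equation unit V) :
  exists l, (forall e, In e l -> Sys e) /\
    forall v, (forall e, Sys e -> shape_e e = s -> sat_eq M v e) <->
              (forall e, In e l -> sat_eq M v e).
Proof.
  destruct (classic (exists e1 e2, Sys e1 /\ shape_e e1 = s /\ Sys e2 /\
       shape_e e2 = s /\ ~ exists w, sat_eq M w e1 /\ sat_eq M w e2))
    as [[e1 [e2 [S1 [T1 [S2 [T2 N]]]]]]|Hn].
  - exists [e1; e2]; split.
    + intros e [<-|[<-|[]]]; assumption.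
    + intro v; split.
      * intros H e [<-|[<-|[]]]; auto.
      * intros H. exfalso. apply N. exists v. split; apply H; simpl; auto.
  - destruct (classic (exists e0, Sys e0 /\ shape_e e0 = s)) as [[e0 [S0 T0]]|Hn0].
    + exists [e0]; split.
      * intros e [<-|[]]; assumption.
      * intro v; split.
        -- intros H e [<-|[]]; auto.
        -- intros H e Se Te.
           assert (Hv : sat_eq M v e0) by (apply H; left; reflexivity).
           destruct (classic (exists w, sat_eq M w e0 /\ sat_eq M w e)) as [[w [W1 W2]]|Nw].
           ++ apply (Hsame w v e0 e); auto; congruence.
           ++ exfalso. apply Hn. exists e0, e. auto.
    + exists []; split.
      * intros e [].
      * intro v; split.
        -- intros _ e [].
        -- intros _ e Se Te. exfalso. apply Hn0. exists e. auto.
Qed.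

Lemma list_fin {A V : Type} (M : A -> A -> A -> Prop)
  (Hsame : forall w v (e1 e2 : equation A V), shape_e e1 = shape_e e2 ->
     sat_eq M w e1 -> sat_eq M w e2 -> sat_eq M v e1 -> sat_eq M v e2)
  (Sys : equation A V -> Prop) (L : list (equation unit V)) :
  exists l, (forall e, In e l -> Sys e) /\
    forall v, (forall e, Sys e -> In (shape_e e) L -> sat_eq M v e) <->
              (forall e, In e l -> sat_eq M v e).
Proof.
  induction L as [|s L IH].
  - exists []; split; [intros e []|intro v; split; [intros _ e []|intros _ e _ []]].
  - destruct IH as [l [Hl Hv]].
    destruct (class_fin M Hsame Sys s) as [ls [Hls Hvs]].
    exists (ls ++ l); split.
    + intros e He; apply in_app_or in He; destruct He; auto.
    + intro v; split.
      * intros H e He; apply in_app_or in He; destruct He as [He|He].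
        -- apply (proj1 (Hvs v)); auto. intros e' S' T'. apply H; auto. left; auto.
        -- apply (proj1 (Hv v)); auto. intros e' S' T'. apply H; auto. right; auto.
      * intros H e Se [Te|Te].
        -- apply (proj2 (Hvs v)); auto. intros e' He'. apply H, in_or_app; auto.
        -- apply (proj2 (Hv v)); auto. intros e' He'. apply H, in_or_app; auto.
Qed.

Theorem theorem5 (S : Type) (op : S -> S -> S)
  (Hhom : homogroup op)
  (Hker : forall K, is_kernel op K -> forall x, K x <-> Red op x)
  (I : Type) :
  eq_noetherian (@PowM S I op).
Proof.
  destruct Hhom as [assoc [K [Kk [Kcl [e [Ke [Hid Hinv]]]]]]].
  assert (Kp : forall a b, K (op a b)).
  { intros a b. apply (proj2 (Hker K Kk _)). exists a, b. reflexivity. }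
  assert (Hid' : forall a b, op e (op a b) = op a b /\ op (op a b) e = op a b)
    by (intros; apply Hid, Kp).
  assert (Hinv' : forall a b, exists y, op y (op a b) = e /\ op (op a b) y = e).
  { intros a b. destruct (Hinv _ (Kp a b)) as [y [_ [H1 H2]]]. eauto. }
  pose proof (rcanc op e assoc Hid' Hinv') as RC.
  pose proof (lcanc op e assoc Hid' Hinv') as LC.
  intros n Sys0.
  destruct (list_fin (PowM op) (fun w v e1 e2 => same_shape op RC LC w v e1 e2)
              Sys0 (all_shapes n)) as [l [Hl Hv]].
  exists l; split; [exact Hl|].
  intro v; rewrite <- Hv; split.
  - intros H e0 Se _; auto.
  - intros H e0 Se; apply H; auto; apply all_shapes_in.
Qed.
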